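(* Let $n,m\in\mathbb{N}_0$. Then $L_n^{(m)}(2+\sqrt2)=0$, or $L_n^{(m)}(2-\sqrt2)=0$, if and only if $n=2$ and $m=0$.
   Context: Generalized Laguerre polynomials: $L_n^{(\alpha)}(x)=\sum_{j=0}^n(-1)^j\binom{n+\alpha}{n-j}\frac{x^j}{j!}$. *)

(* Defs.v *)
From mathcomp Require Import all_boot all_order all_algebra.
From mathcomp Require Import reals.
Set Implicit Arguments. Unset Strict Implicit. Unset Printing Implicit Defensive.
Import Order.TTheory GRing.Theory Num.Theory.
Local Open Scope ring_scope.

Definition laguerre {R : realType} (n m : nat) (x : R) : R :=
  \sum_(j < n.+1) (-1) ^+ j * ('C(n + m, n - j))%:R * x ^+ j / (j`!)%:R.

(* Main.v *)
Require Import Defs.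
From mathcomp Require Import all_boot all_order all_algebra.
From mathcomp Require Import reals.
From mathcomp Require Import ring lra zify.
Import Order.TTheory GRing.Theory Num.Theory.
Local Open Scope ring_scope.

Lemma nat_irr (a b : nat) : (a ^ 2 = 2 * b ^ 2)%N -> b = 0%N.
Proof.
move=> h; case: b h => [//|b] h.
have a0 : (0 < a)%N.
  case: a h => [|a] //=; rewrite expnS; lia.
have := congr1 (logn 2) h.
rewrite lognM ?expn_gt0 // !lognX; have -> : logn 2 2 = 1%N by [].

lia.
Qed.

Lemma int_irr (a b : int) : a ^+ 2 = 2 * b ^+ 2 -> b = 0.
Proof.
move=> h.
have h' : ((absz a) ^ 2 = 2 * (absz b) ^ 2)%N.
  by rewrite -!abszX -[2%N]/(absz 2) -abszM h.
by move/eqP: (nat_irr _ _ h'); rewrite absz_eq0 => /eqP.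
Qed.

Lemma irr (R : realType) (r : R) (a b : int) : r ^+ 2 = 2 -> a%:~R + b%:~R * r = 0 -> b = 0.
Proof.
move=> hr h.
have e : (a%:~R : R) = - (b%:~R * r) by rewrite -(addrK (b%:~R * r) a%:~R) h sub0r.
have : (a ^+ 2)%:~R = ((2 * b ^+ 2)%:~R : R).
  by rewrite intrM !rmorphXn /= e sqrrN exprMn hr mulrC.
by move/intr_inj; apply: int_irr.
Qed.

Definition bb (n m j : nat) : nat := ('C(n, j) * (n + m) ^_ (n - j))%N.

Lemma bb_eq (n m j : nat) : (j <= n)%N -> (n`! * 'C(n + m, n - j) = bb n m j * j`!)%N.
Proof.
move=> hj.
have : (n`! * 'C(n + m, n - j) * (n - j)`! = bb n m j * j`! * (n - j)`!)%N.
  rewrite -mulnA bin_ffact /bb -(bin_fact hj). ring.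
by move/eqP; rewrite eqn_pmul2r ?fact_gt0 // => /eqP.
Qed.

Lemma lag_eq (R : realType) (n m : nat) (x : R) :
  n`!%:R * laguerre n m x = \sum_(j < n.+1) (-1) ^+ j * (bb n m j)%:R * x ^+ j.
Proof.
rewrite /laguerre mulr_sumr; apply: eq_bigr => j _.
have hj : (j <= n)%N by rewrite -ltnS.
have -> : n`!%:R * ((-1) ^+ j * ('C(n + m, n - j))%:R * x ^+ j / (j`!)%:R) =
   (-1) ^+ j * (n`! * 'C(n + m, n - j))%:R * x ^+ j / (j`!)%:R :> R.
  rewrite natrM; ring.
rewrite bb_eq // natrM.
have nz : (j`!)%:R != 0 :> R by rewrite pnatr_eq0 -lt0n fact_gt0.
field.
exact: nz.
Qed.
Section Z2.
Variable R : realType.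
Variable r : R.
Hypothesis hr : r ^+ 2 = 2.

Definition Z2 (z : R) := exists a b : int, z = a%:~R + b%:~R * r.

Lemma Z2_int (k : int) : Z2 k%:~R.
Proof. by exists k, 0; rewrite mul0r addr0. Qed.

Lemma Z2_nat (k : nat) : Z2 k%:R.
Proof. exact: (Z2_int k). Qed.

Lemma Z2_r : Z2 r.
Proof. by exists 0, 1; rewrite add0r mul1r. Qed.

Lemma Z2D x y : Z2 x -> Z2 y -> Z2 (x + y).
Proof.
move=> [a [b ->]] [c [d ->]]; exists (a + c), (b + d).
rewrite !rmorphD /=; ring.
Qed.

Lemma Z2M x y : Z2 x -> Z2 y -> Z2 (x * y).
Proof.
move=> [a [b ->]] [c [d ->]]; exists (a * c + 2 * b * d), (a * d + b * c).
rewrite !rmorphD !rmorphM /= -[2%:~R]hr; ring.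
Qed.

Lemma Z2X x k : Z2 x -> Z2 (x ^+ k).
Proof.
move=> hx; elim: k => [|k ih]; first by rewrite expr0; exact: (Z2_nat 1).
by rewrite exprS; apply: Z2M.
Qed.

Lemma Z2_sign k : Z2 ((-1) ^+ k).
Proof. apply: Z2X; exact: (Z2_int (-1)). Qed.

Lemma Z2x : Z2 (2 + r).
Proof. apply: Z2D; [exact: (Z2_nat 2) | exact: Z2_r]. Qed.

Lemma Z2xb : Z2 (2 - r).
Proof. apply: Z2D; [exact: (Z2_nat 2) | ]. by exists 0, (-1); rewrite add0r mulN1r. Qed.

Lemma key (p k c : nat) (y : R) : odd p -> (1 < p)%N -> Z2 y ->
  (-1) ^+ k * (2 + r) ^+ k * (c%:R - (2 + r)) + p%:R * y = 0 -> False.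
Proof.
move=> op p1 zy E.
have [A [B hAB]] : Z2 ((-1) ^+ k * (2 - r) ^+ k * y).
  apply: Z2M => //; apply: Z2M; [exact: Z2_sign | exact: Z2X Z2xb].
set u := (-1) ^+ k : R.
set v := (2 - r) ^+ k.
set w := (2 + r) ^+ k.
have uu : u * u = 1 by rewrite /u -exprMn mulrNN mulr1 expr1n.
have vw : v * w = 2 ^+ k.
  rewrite /v /w -exprMn; congr (_ ^+ _).
  have -> : (2 - r) * (2 + r) = 4 - r ^+ 2 by ring.
  by rewrite hr; ring.
have E2 : u * v * (u * w * (c%:R - (2 + r)) + p%:R * y) =
    (u * u) * (v * w) * (c%:R - (2 + r)) + p%:R * (u * v * y) by ring.
rewrite E mulr0 uu vw hAB mul1r in E2.
have E3 : ((2 ^+ k * (c%:Z - 2) + p%:Z * A)%:~R + ((p%:Z * B - 2 ^+ k))%:~R * r : R) = 0.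
  rewrite [RHS]E2 !rmorphD !rmorphM !rmorphB /= !rmorphXn /= rmorphN /= rmorphXn /= -!pmulrn; ring.
have := @irr _ _ _ _ hr E3.
move/eqP; rewrite subr_eq0 => /eqP hB.
have hd : (p %| 2 ^ k)%N.
  apply/dvdnP; exists `|B|%N.
  have := congr1 absz hB; rewrite abszM abszX /= => <-.
  by rewrite mulnC.
have cp : coprime p (2 ^ k) by apply: coprimeXr; rewrite coprimen2.
move: cp; rewrite /coprime; move/gcdn_idPl: hd => -> /eqP p1'.
by rewrite p1' in p1.
Qed.

Lemma main_ne (n m : nat) : ~ (n = 2%N /\ m = 0%N) -> laguerre n m (2 + r) <> 0.
Proof.
move=> hnm L0.
have S0 : \sum_(j < n.+1) (-1) ^+ j * (bb n m j)%:R * (2 + r) ^+ j = 0.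
  by rewrite -lag_eq L0 mulr0.
case: n hnm L0 S0 => [|n'] hnm _ S0.
  move: S0; rewrite big_ord1 /= /bb bin0 subnn ffactn0 expr0 !mulr1.
  by move/eqP; rewrite oner_eq0.
rewrite -(big_mkord xpredT (fun j => (-1) ^+ j * (bb n'.+1 m j)%:R * (2 + r) ^+ j)) big_nat_recr //= big_nat_recr //= in S0.
have bn : bb n'.+1 m n'.+1 = 1%N by rewrite /bb binn subnn ffactn0.
rewrite bn in S0.
case: (leqP (n'.+1 + m) 2) => small.
  have n'0 : n' = 0%N.
    case: n' hnm small S0 bn => [//|[|n'']] hnm small S0 bn; last by lia.
    by exfalso; apply: hnm; split => //; lia.
  subst n'.
  rewrite big_geq // add0r in S0.
  have E : (((bb 1 m 0)%:Z - 2)%:~R + (-1)%:~R * r : R) = 0.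
    rewrite -[RHS]S0 rmorphB /= -pmulrn; ring.
  by have := @irr _ _ _ _ hr E.
pose N := (n'.+1 + m)%N.
pose p := if odd N then N else N.-1.
have op : odd p.
  rewrite /p /N addSn /=; case: ifP => //.
  by move/negbT/negPn.
have p1 : (1 < p)%N by rewrite /p; case: ifP => _; rewrite /N; lia.
have hpN : (p %| N * N.-1)%N.
  by rewrite /p; case: ifP => _; [apply: dvdn_mulr | apply: dvdn_mull].
have hdiv : forall j, (j < n')%N -> (p %| bb n'.+1 m j)%N.
  move=> j hj; rewrite /bb; apply: dvdn_mull.
  have -> : (n'.+1 - j = (n'.-1 - j).+2)%N by lia.
  by rewrite !ffactnS mulnA; apply: dvdn_mulr.
pose y := \sum_(0 <= j < n') (-1) ^+ j * ((bb n'.+1 m j) %/ p)%:R * (2 + r) ^+ j.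
have hy : \sum_(0 <= j < n') (-1) ^+ j * (bb n'.+1 m j)%:R * (2 + r) ^+ j = p%:R * y.
  rewrite /y mulr_sumr; apply: eq_big_nat => j /andP [_ hj].
  have e := divnK (hdiv j hj).
  set q := (bb n'.+1 m j %/ p)%N in e *.
  by rewrite -e natrM; ring.
have zy : Z2 y.
  apply: (big_ind Z2) => //; first exact: (Z2_nat 0).
    by move=> a b; apply: Z2D.
  move=> j _; apply: Z2M; last exact: Z2X Z2x.
  by apply: Z2M; [exact: Z2_sign | exact: Z2_nat].
apply: (@key p n' (bb n'.+1 m n') y op p1 zy).
rewrite -[RHS]S0 hy !exprS; ring.
Qed.
End Z2.

Theorem proposition3 (R : realType) (n m : nat) :
  (laguerre n m (2 + Num.sqrt (2 : R)) = 0 \/ laguerre n m (2 - Num.sqrt (2 : R)) = 0)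
  <-> (n = 2%N /\ m = 0%N).
Proof.
have hr : Num.sqrt (2 : R) ^+ 2 = 2 by rewrite sqr_sqrtr // ler0n.
have hr' : (- Num.sqrt (2 : R)) ^+ 2 = 2 by rewrite sqrrN.
split.
  case: (boolP ((n == 2%N) && (m == 0%N))) => [/andP [/eqP -> /eqP ->] //| hb].
  have hnm : ~ (n = 2%N /\ m = 0%N) by move=> [hn hm]; move: hb; rewrite hn hm.
  case=> h.
    by exfalso; exact: (@main_ne R _ hr _ _ hnm h).
  by exfalso; exact: (@main_ne R _ hr' _ _ hnm h).
move=> [-> ->]; left.
rewrite /laguerre !big_ord_recr big_ord0 /=.
set s := Num.sqrt (2 : R).
have e : (2 + s) ^+ 2 = 6 + 4 * s by rewrite sqrrD hr; ring.
rewrite e /=.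
rewrite (_ : 'C(2 + 0, 2 - 0) = 1%N) // (_ : 'C(2 + 0, 2 - 1) = 2%N) //.
rewrite (_ : 'C(2 + 0, 2 - 2) = 1%N) // (_ : 0`! = 1%N) // (_ : 1`! = 1%N) //.
rewrite (_ : 2`! = 2%N) //.
have h2 : (2%:R : R) != 0 by rewrite pnatr_eq0.
by field.
Qed.
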